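(* Let $\Gamma$ be a connected, undirected graph without loops on $n$ nodes with Laplacian $\mathbf L=\mathbf K-\mathbf A$, and let $\phi_1,\dots,\phi_n$ be an orthonormal basis of $\mathbb R^n$ of eigenvectors of $\mathbf L$ with $\mathbf L\phi_i=\mu_i\phi_i$, and assume $\mu_i\neq 2$ for all $i$. For each $i$ let $\xi_i$ be a (complex) square root of $\mu_i^2-4$, $\lambda_i^+=\tfrac12(\xi_i-\mu_i)$, $\lambda_i^-=-\tfrac12(\xi_i+\mu_i)$. Let $$\mathbf G=\begin{bmatrix}\mathbf 0&\mathbf I\\-\mathbf I&-\mathbf L\end{bmatrix},$$ fix a node $h$, $F_0\in\mathbb R$ and $\omega>0$ with $\omega\neq1$, and let $\mathbf y(t)=(\mathbf x(t),\mathbf v(t))$ solve $\dot{\mathbf y}=\mathbf G\mathbf y+\mathbf b(t)$, $\mathbf y(0)=\mathbf 0$, with $\mathbf b(t)=F_0\sin(\omega t)(\mathbf 0,\mathbf e_h)^T$. Then $$\mathbf x(t)=\sum_{i=1}^n\frac{F_0\phi_i(h)}{\xi_i}\Bigg[\Big(\frac{1-(\lambda_i^-)^2}{\xi_i(\omega^2+(\lambda_i^-)^2)}+\frac{1-(\lambda_i^+)^2}{\xi_i(\omega^2+(\lambda_i^+)^2)}\Big)\sin\omega t+\Big(\frac{1}{\omega^2+(\lambda_i^-)^2}-\frac{1}{\omega^2+(\lambda_i^+)^2}\Big)\omega\cos\omega t+\frac{\omega\, e^{\lambda_i^+t}}{\omega^2+(\lambda_i^+)^2}-\frac{\omega\,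 e^{\lambda_i^-t}}{\omega^2+(\lambda_i^-)^2}\Bigg]\phi_i$$ and $$\mathbf v(t)=\sum_{i=1}^n\frac{F_0\phi_i(h)}{\xi_i}\Bigg[\Big(\frac{\lambda_i^-(1-(\lambda_i^-)^2)}{\xi_i(\omega^2+(\lambda_i^-)^2)}+\frac{\lambda_i^+(1-(\lambda_i^+)^2)}{\xi_i(\omega^2+(\lambda_i^+)^2)}\Big)\sin\omega t+\Big(\frac{\lambda_i^-}{\omega^2+(\lambda_i^-)^2}-\frac{\lambda_i^+}{\omega^2+(\lambda_i^+)^2}\Big)\omega\cos\omega t+\frac{\omega\lambda_i^+ e^{\lambda_i^+t}}{\omega^2+(\lambda_i^+)^2}-\frac{\omega\lambda_i^- e^{\lambda_i^-t}}{\omega^2+(\lambda_i^-)^2}\Bigg]\phi_i.$$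
   Context: $\mathbf A$ is the adjacency matrix, $\mathbf K$ the diagonal degree matrix, $\mathbf I,\mathbf 0$ the $n\times n$ identity and zero matrices, $\mathbf e_h$ the $h$-th standard basis vector, $\phi_i(h)$ the $h$-th component of $\phi_i$. The equation is $\ddot{\mathbf x}+\mathbf L\dot{\mathbf x}+\mathbf x=F_0\sin(\omega t)\mathbf e_h$. $\lambda_i^\pm$ are the two roots of $\lambda^2+\mu_i\lambda+1=0$. *)

(* Defs.v *)
From HB Require Import structures.
From mathcomp Require Import all_boot all_order all_algebra.
From mathcomp Require Import complex.
From mathcomp Require Import all_classical all_reals all_analysis.
Set Implicit Arguments. Unset Strict Implicit. Unset Printing Implicit Defensive.
Import Order.TTheory GRing.Theory Num.Theory.
Local Open Scope ring_scope.

Section Defs.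
Variable R : realType.

Definition is_simple_adjacency (n : nat) (A : 'M[R]_n) : Prop :=
  (forall i j, A i j = 0 \/ A i j = 1) /\
  (forall i j, A i j = A j i) /\
  (forall i, A i i = 0).

Definition graph_connected (n : nat) (A : 'M[R]_n) : Prop :=
  forall i j : 'I_n, connect (fun a b => A a b != 0) i j.

Definition degree_mx (n : nat) (A : 'M[R]_n) : 'M[R]_n :=
  diag_mx (\row_i \sum_j A i j).

Definition laplacian (n : nat) (A : 'M[R]_n) : 'M[R]_n := degree_mx A - A.

Definition Gmx (n : nat) (L : 'M[R]_n) : 'M[R]_(n + n) :=
  block_mx 0 1%:M (- 1%:M) (- L).

Definition forcing (n : nat) (h : 'I_n) (F0 w t : R) : 'cV[R]_(n + n) :=
  col_mx 0 ((F0 * sin (w * t)) *: delta_mx h 0).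

Definition cexp (z : R[i]) : R[i] :=
  match z with Complex a b => Complex (expR a * cos b) (expR a * sin b) end.

Definition cvC (n : nat) (u : 'cV[R]_n) : 'cV[R[i]]_n :=
  map_mx (fun r : R => Complex r 0) u.

Definition RC (r : R) : R[i] := Complex r 0.

End Defs.

(* Main.v *)
Require Import Defs.
From HB Require Import structures.
From mathcomp Require Import all_boot all_order all_algebra.
From mathcomp Require Import complex.
From mathcomp Require Import all_classical all_reals all_analysis.
Import Order.TTheory GRing.Theory Num.Theory.

From mathcomp Require Import ring lra.

Module HA.
Import Order.TTheory GRing.Theory Num.Theory.
Import numFieldNormedType.Exports.
Local Open Scope ring_scope.
Set Implicit Arguments. Unset Strict Implicit.

Section H.
Variable R : realType.
Implicit Types (f g : R -> R) (t a b c : R).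

Lemma dD f g t a b : is_derive t 1 f a -> is_derive t 1 g b ->
  is_derive t 1 (fun s => f s + g s) (a + b).
Proof. move=> H1 H2; exact: (is_deriveD H1 H2). Qed.
Lemma dB f g t a b : is_derive t 1 f a -> is_derive t 1 g b ->
  is_derive t 1 (fun s => f s - g s) (a - b).
Proof. move=> H1 H2; exact: (is_deriveB H1 H2). Qed.
Lemma dN f t a : is_derive t 1 f a -> is_derive t 1 (fun s => - f s) (- a).
Proof. move=> H1; exact: (is_deriveN H1). Qed.
Lemma dZ f t a c : is_derive t 1 f a -> is_derive t 1 (fun s => c * f s) (c * a).
Proof. move=> H1; exact: (is_deriveZ c H1). Qed.
Lemma dM f g t a b : is_derive t 1 f a -> is_derive t 1 g b ->
  is_derive t 1 (fun s => f s * g s) (f t * b + g t * a).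
Proof. move=> H1 H2; exact: (is_deriveM H1 H2). Qed.
Lemma dC t (c : R) : is_derive t 1 (fun _ => c) 0.
Proof. exact: is_derive_cst. Qed.
Lemma dlin t (c : R) : is_derive t 1 (fun s => c * s) c.
Proof. have := @dZ (fun s => s) t 1 c (@is_derive_id _ _ t 1). by rewrite mulr1. Qed.
Lemma dcomp f g t a b : is_derive (g t) 1 f a -> is_derive t 1 g b ->
  is_derive t 1 (fun s => f (g s)) (a * b).
Proof. move=> H1 H2; exact: (is_derive1_comp H1 H2). Qed.
Lemma dexp t c : is_derive t 1 (fun s => expR (c * s)) (expR (c * t) * c).
Proof. exact: dcomp (is_derive_expR _) (dlin _ _). Qed.
Lemma dsin t c : is_derive t 1 (fun s => sin (c * s)) (cos (c * t) * c).
Proof. exact: dcomp (is_derive_sin _) (dlin _ _). Qed.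
Lemma dcos t c : is_derive t 1 (fun s => cos (c * s)) (- sin (c * t) * c).
Proof. exact: dcomp (is_derive_cos _) (dlin _ _). Qed.
Lemma dentry m k (M : R -> 'M[R]_(m, k)) t D i j :
  is_derive t 1 M D -> is_derive t 1 (fun s => M s i j) (D i j).
Proof.
move=> [dM <-]; apply: DeriveDef; first by move/derivable_mxP: dM; apply.
by rewrite derive_mx // mxE.
Qed.
Lemma dcont (f df : R -> R) : (forall t, is_derive t 1 f (df t)) -> forall x : R, continuous_at x f.
Proof. move=> H t; have [d _] := H t; exact/differentiable_continuous/derivable1_diffP. Qed.
End H.

End HA.
Import HA.

Module HU.
Import Order.TTheory GRing.Theory Num.Theory.
Import numFieldNormedType.Exports.
Local Open Scope ring_scope.

Section U.
Variable R : realType.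
Lemma uniq0 (mu : R) (p q : R -> R) : 0 <= mu ->
  (forall t : R, is_derive t 1 p (q t)) ->
  (forall t : R, is_derive t 1 q (- p t - mu * q t)) -> p 0 = 0 -> q 0 = 0 ->
  forall t, p t = 0 /\ q t = 0.
Proof.
move=> mu0 dp dq p0 q0 t.
pose E := fun s => p s * p s + q s * q s.
have dE (s : R) : is_derive s 1 E (-(2 * mu * (q s * q s))).
  have H := dD (dM (dp s) (dp s)) (dM (dq s) (dq s)). rewrite /E; apply: is_derive_eq H _.
  by ring.
have E0 : E 0 = 0 by rewrite /E p0 q0; ring.
have Ege0 (s : R) : 0 <= E s by rewrite /E; nra.
suff : E t = 0.
  rewrite /E => H; split; nra.
have [tgt|tlt|->] := ltgtP t 0; last by [].
- pose G := fun s => expR (2 * mu * s) * E s.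
  have dG (s : R) : is_derive s 1 G (expR (2 * mu * s) * (2 * mu * (p s * p s))).
    have H := dM (dexp s (2 * mu)) (dE s). rewrite /G; apply: is_derive_eq H _.
    rewrite /E; ring.
  have [c _ Hc] := MVT tgt (fun x _ => dG x) (continuous_subspaceT (dcont dG)).
  move: Hc; rewrite /G E0 mulr0 => Hc.
  have h1 : 0 <= expR (2 * mu * c) * (2 * mu * (p c * p c)) * (0 - t).
    apply: mulr_ge0; last by lra.
    apply: mulr_ge0; first exact: expR_ge0.
    apply: mulr_ge0; first lra. nra.
  have h2 : 0 < expR (2 * mu * t) := expR_gt0 _.
  have := Ege0 t. rewrite -Hc in h1. nra.
- have [c _ Hc] := MVT tlt (fun x _ => dE x) (continuous_subspaceT (dcont dE)).
  move: Hc; rewrite E0 subr0 => Hc.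
  have : 0 <= 2 * mu * (q c * q c) by apply: mulr_ge0; [lra|nra].
  have := Ege0 t; nra.
Qed.
End U.

End HU.
Import HU.

Module HAlg.
Import Order.TTheory GRing.Theory Num.Theory.
Local Open Scope ring_scope.
Set Implicit Arguments. Unset Strict Implicit.

Section Alg.
Variable C : fieldType.
Definition Zexp (p q xi W f S Co Ep Eq : C) : C :=
  f / xi *
      ( ((1 - q ^+ 2) / (xi * (W ^+ 2 + q ^+ 2))
         + (1 - p ^+ 2) / (xi * (W ^+ 2 + p ^+ 2))) * S
      + (1 / (W ^+ 2 + q ^+ 2) - 1 / (W ^+ 2 + p ^+ 2)) * W * Co
      + W * Ep / (W ^+ 2 + p ^+ 2)
      - W * Eq / (W ^+ 2 + q ^+ 2)).
Definition Uexp (p q xi W f S Co Ep Eq : C) : C :=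
  f / xi *
      ( (q * (1 - q ^+ 2) / (xi * (W ^+ 2 + q ^+ 2))
         + p * (1 - p ^+ 2) / (xi * (W ^+ 2 + p ^+ 2))) * S
      + (q / (W ^+ 2 + q ^+ 2) - p / (W ^+ 2 + p ^+ 2)) * W * Co
      + W * p * Ep / (W ^+ 2 + p ^+ 2)
      - W * q * Eq / (W ^+ 2 + q ^+ 2)).

Lemma Zexp_lin p q xi W f S Co Ep Eq :
  Zexp p q xi W f S Co Ep Eq =
  Zexp p q xi W f 1 0 0 0 * S + Zexp p q xi W f 0 1 0 0 * Co +
  Zexp p q xi W f 0 0 1 0 * Ep + Zexp p q xi W f 0 0 0 1 * Eq.
Proof. rewrite /Zexp; ring. Qed.
Lemma Uexp_lin p q xi W f S Co Ep Eq :
  Uexp p q xi W f S Co Ep Eq =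
  Uexp p q xi W f 1 0 0 0 * S + Uexp p q xi W f 0 1 0 0 * Co +
  Uexp p q xi W f 0 0 1 0 * Ep + Uexp p q xi W f 0 0 0 1 * Eq.
Proof. rewrite /Uexp; ring. Qed.

Lemma ode_alg p q xi m W f S Co Ep Eq :
  xi = p - q -> m = - (p + q) -> p * q = 1 -> xi != 0 ->
  W ^+ 2 + p ^+ 2 != 0 -> W ^+ 2 + q ^+ 2 != 0 ->
  Zexp p q xi W f (W * Co) (- (W * S)) (p * Ep) (q * Eq) = Uexp p q xi W f S Co Ep Eq /\
  Uexp p q xi W f (W * Co) (- (W * S)) (p * Ep) (q * Eq) =
    - Zexp p q xi W f S Co Ep Eq - m * Uexp p q xi W f S Co Ep Eq + f * S.
Proof.
move=> -> -> pq xi0 Dp Dq.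
have p0 : p != 0 by apply/eqP => p0; move: pq; rewrite p0 mul0r => /eqP; rewrite eq_sym oner_eq0.
have e1 : (W * p) ^+ 2 + 1 = p ^+ 2 * (W ^+ 2 + q ^+ 2).
  transitivity ((W * p) ^+ 2 + (p * q) ^+ 2); first by rewrite pq expr1n.
  ring.
have e2 : p * p - 1 = p * (p - q).
  transitivity (p * p - p * q); first by rewrite pq.
  ring.
have c1 : (W * p) ^+ 2 + 1 != 0 by rewrite e1 mulf_neq0 // expf_neq0.
have c2 : p * p - 1 != 0 by rewrite e2 mulf_neq0.
have -> : q = p^-1 by rewrite -[p^-1]mulr1 -pq mulKf.
rewrite /Zexp /Uexp; split; field; by rewrite p0 c1 c2 Dp.
Qed.
End Alg.

End HAlg.
Import HAlg.

Module HCx.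
Import Order.TTheory GRing.Theory Num.Theory.
Import numFieldNormedType.Exports.
Local Open Scope ring_scope.
Set Implicit Arguments. Unset Strict Implicit.

Section Cx.
Variable R : realType.
Local Notation C := (R[i]).
Implicit Types (t a b : R) (x y z k d : C).

Lemma cReD x y : complex.Re (x + y) = complex.Re x + complex.Re y.
Proof. by case: x; case: y. Qed.
Lemma cImD x y : complex.Im (x + y) = complex.Im x + complex.Im y.
Proof. by case: x; case: y. Qed.
Lemma cReN x : complex.Re (- x) = - complex.Re x.
Proof. by case: x. Qed.
Lemma cImN x : complex.Im (- x) = - complex.Im x.
Proof. by case: x. Qed.
Lemma cReM x y : complex.Re (x * y) = complex.Re x * complex.Re y - complex.Im x * complex.Im y.
Proof. by case: x; case: y. Qed.
Lemma cImM x y : complex.Im (x * y) = complex.Re x * complex.Im y + complex.Im x * complex.Re y.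
Proof. by case: x; case: y. Qed.
Lemma RCM a b : RC (a * b) = RC a * RC b.
Proof. by apply/eqP; rewrite eq_complex /= !mulr0 !mul0r subr0 addr0 !eqxx. Qed.
Lemma RCN a : RC (- a) = - RC a.
Proof. by apply/eqP; rewrite eq_complex /= oppr0 !eqxx. Qed.

Lemma dext (f f' : R -> R) t a : is_derive t 1 f a -> (forall s, f s = f' s) -> is_derive t 1 f' a.
Proof. by move=> H e; have <- : f = f' by apply: funext. Qed.

Definition cder (g : R -> C) t d :=
  is_derive t 1 (fun s => complex.Re (g s)) (complex.Re d) /\
  is_derive t 1 (fun s => complex.Im (g s)) (complex.Im d).

Lemma cder_eq g t d d' : cder g t d -> d = d' -> cder g t d'.
Proof. by move=> H <-. Qed.

Lemma cder_ext g g' t d : (forall s, g s = g' s) -> cder g t d -> cder g' t d.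
Proof. by move=> e; have -> : g = g' by apply: funext. Qed.

Lemma cderD g1 g2 t d1 d2 : cder g1 t d1 -> cder g2 t d2 ->
  cder (fun s => g1 s + g2 s) t (d1 + d2).
Proof.
move=> [r1 i1] [r2 i2]; split.
  rewrite cReD; move/dext: (dD r1 r2); apply => s; by rewrite cReD.
rewrite cImD; move/dext: (dD i1 i2); apply => s; by rewrite cImD.
Qed.

Lemma cderN g t d : cder g t d -> cder (fun s => - g s) t (- d).
Proof.
move=> [r1 i1]; split.
  rewrite cReN; move/dext: (dN r1); apply => s; by rewrite cReN.
rewrite cImN; move/dext: (dN i1); apply => s; by rewrite cImN.
Qed.

Lemma cderMl k g t d : cder g t d -> cder (fun s => k * g s) t (k * d).
Proof.
move=> [r1 i1]; split.
  rewrite cReM; move/dext: (dB (dZ (complex.Re k) r1) (dZ (complex.Im k) i1)); apply => s; by rewrite cReM.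
rewrite cImM; move/dext: (dD (dZ (complex.Re k) i1) (dZ (complex.Im k) r1)); apply => s; by rewrite cImM.
Qed.

Lemma cderRC f t a : is_derive t 1 f a -> cder (fun s => RC (f s)) t (RC a).
Proof. by move=> H; split => //=; exact: dC. Qed.

Lemma cder_cexp (l : C) t : cder (fun s => cexp (l * RC s)) t (l * cexp (l * RC t)).
Proof.
case: l => a b.
have e s : (Complex a b) * RC s = Complex (a * s) (b * s).
  by apply/eqP; rewrite eq_complex /= !mulr0 subr0 add0r !eqxx.
split.
  have H : is_derive t 1 (fun s => complex.Re (cexp (Complex a b * RC s)))
     (expR (a * t) * (- sin (b * t) * b) + cos (b * t) * (expR (a * t) * a)).
    move/dext: (dM (dexp t a) (dcos t b)); apply => s; by rewrite e.
  apply: is_derive_eq H _; rewrite e /=; ring.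
have H : is_derive t 1 (fun s => complex.Im (cexp (Complex a b * RC s)))
   (expR (a * t) * (cos (b * t) * b) + sin (b * t) * (expR (a * t) * a)).
  move/dext: (dM (dexp t a) (dsin t b)); apply => s; by rewrite e.
apply: is_derive_eq H _; rewrite e /=; ring.
Qed.

End Cx.

End HCx.
Import HCx.

Module HM.
Import Order.TTheory GRing.Theory Num.Theory.
Import numFieldNormedType.Exports.
Local Open Scope ring_scope.
Set Implicit Arguments. Unset Strict Implicit.
Section M.
Variable R : realType.
Local Notation C := (R[i]).

Lemma RCsq4 (mu : R) : RC (mu ^+ 2 - 4) = RC mu ^+ 2 - 4 :> C.
Proof.
change (real_complex R (mu ^+ 2 - 4) = (real_complex R mu) ^+ 2 - 4).
by rewrite rmorphB rmorphXn rmorph_nat.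
Qed.

Lemma nzW (p m : C) (mu w : R) : m = RC mu -> p ^+ 2 + m * p + 1 = 0 ->
  0 < w -> w != 1 -> RC w ^+ 2 + p ^+ 2 != 0.
Proof.
move=> -> hp w0 w1; case: p hp => a b hp; apply/eqP => H.
have hr := congr1 (@complex.Re R) hp; have hi := congr1 (@complex.Im R) hp.
have Hr := congr1 (@complex.Re R) H; have Hi := congr1 (@complex.Im R) H.
move: hr hi Hr Hi; rewrite !expr2 /= => hr hi Hr Hi.
have [b0|b0] := eqVneq b 0.
  move: Hr; rewrite b0; nra.
have mu0 : mu = 0.
  apply: (mulIf b0); rewrite mul0r; lra.
move: hr; rewrite mu0 => hr.
have [wl|wg|we] := ltgtP w 1; [nra|nra|by move: w1; rewrite we eqxx].
Qed.

Lemma cder_lin4 (F : C -> C -> C -> C -> C) g1 g2 g3 g4 d1 d2 d3 d4 (t : R) :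
 (forall x1 x2 x3 x4, F x1 x2 x3 x4 = F 1 0 0 0 * x1 + F 0 1 0 0 * x2 + F 0 0 1 0 * x3 + F 0 0 0 1 * x4) ->
 cder g1 t d1 -> cder g2 t d2 -> cder g3 t d3 -> cder g4 t d4 ->
 cder (fun s => F (g1 s) (g2 s) (g3 s) (g4 s)) t (F d1 d2 d3 d4).
Proof.
move=> HF h1 h2 h3 h4; rewrite HF.
apply: cder_ext (fun s => esym (HF _ _ _ _)) _.
exact: cderD (cderD (cderD (cderMl _ h1) (cderMl _ h2)) (cderMl _ h3)) (cderMl _ h4).
Qed.


Lemma cexp0 (p : C) : cexp (p * RC 0) = 1.
Proof.
have -> : p * RC 0 = 0 by apply/eqP; rewrite eq_complex /= !mulr0; apply/andP; split; apply/eqP; ring.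
by apply/eqP; rewrite eq_complex /= expR0 sin0 cos0 !mul1r !eqxx.
Qed.

Lemma mode (mu f w : R) (xi : C) (z u : R -> R) :
  0 <= mu -> mu != 2 -> xi ^+ 2 = RC (mu ^+ 2 - 4) -> 0 < w -> w != 1 ->
  (forall t : R, is_derive t 1 z (u t)) ->
  (forall t : R, is_derive t 1 u (- z t - mu * u t + f * sin (w * t))) ->
  z 0 = 0 -> u 0 = 0 ->
  forall t : R,
  RC (z t) = Zexp ((xi - RC mu) / 2) (- ((xi + RC mu) / 2)) xi (RC w) (RC f)
      (RC (sin (w * t))) (RC (cos (w * t)))
      (cexp ((xi - RC mu) / 2 * RC t)) (cexp (- ((xi + RC mu) / 2) * RC t)) /\
  RC (u t) = Uexp ((xi - RC mu) / 2) (- ((xi + RC mu) / 2)) xi (RC w) (RC f)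
      (RC (sin (w * t))) (RC (cos (w * t)))
      (cexp ((xi - RC mu) / 2 * RC t)) (cexp (- ((xi + RC mu) / 2) * RC t)).
Proof.
move=> mu0 mu2 Hxi w0 w1 dz du z0 u0.
set p := (xi - RC mu) / 2; set q := - ((xi + RC mu) / 2); set m := RC mu.
have two0 : (2 : C) != 0 by rewrite pnatr_eq0.
have four0 : (4 : C) != 0 by rewrite pnatr_eq0.
have xi0 : xi != 0.
  apply/eqP => x0; move: Hxi; rewrite x0 expr0n /= => /(congr1 (@complex.Re R)) /= H.
  have : (mu - 2) * (mu + 2) = 0 by transitivity (mu ^+ 2 - 4); [ring|by rewrite -H].
  move/eqP; rewrite mulf_eq0 => /orP[]; [rewrite subr_eq0 (negbTE mu2)//|lra].
have pq : p * q = 1.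
  have -> : p * q = (m ^+ 2 - xi ^+ 2) / 4.
    by rewrite /p /q /m; field.
  by rewrite Hxi RCsq4 -/m; field.
have xpq : xi = p - q by rewrite /p /q /m; field.
have mpq : m = - (p + q) by rewrite /p /q /m; field.
have hp : p ^+ 2 + m * p + 1 = 0.
  rewrite mpq; have -> : p ^+ 2 + - (p + q) * p + 1 = 1 - p * q by ring.
  by rewrite pq subrr.
have hq : q ^+ 2 + m * q + 1 = 0.
  rewrite mpq; have -> : q ^+ 2 + - (p + q) * q + 1 = 1 - p * q by ring.
  by rewrite pq subrr.
have Dp := nzW erefl hp w0 w1.
have Dq := nzW erefl hq w0 w1.
pose Zc s := Zexp p q xi (RC w) (RC f) (RC (sin (w * s))) (RC (cos (w * s)))
      (cexp (p * RC s)) (cexp (q * RC s)).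
pose Uc s := Uexp p q xi (RC w) (RC f) (RC (sin (w * s))) (RC (cos (w * s)))
      (cexp (p * RC s)) (cexp (q * RC s)).
have dS (s : R) : cder (fun s => RC (sin (w * s))) s (RC w * RC (cos (w * s))).
  by apply: cder_eq (cderRC (dsin s w)) _; rewrite -RCM mulrC.
have dCo (s : R) : cder (fun s => RC (cos (w * s))) s (- (RC w * RC (sin (w * s)))).
  by apply: cder_eq (cderRC (dcos s w)) _; rewrite -RCM -RCN; congr RC; ring.
have dZc (s : R) : cder Zc s (Uc s).
  have := cder_lin4 (Zexp_lin p q xi (RC w) (RC f)) (dS s) (dCo s) (cder_cexp p s) (cder_cexp q s).
  move/cder_eq; apply.
  exact: (ode_alg (RC f) (RC (sin (w * s))) (RC (cos (w * s))) (cexp (p * RC s)) (cexp (q * RC s)) xpq mpq pq xi0 Dp Dq).1.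
have dUc (s : R) : cder Uc s (- Zc s - m * Uc s + RC f * RC (sin (w * s))).
  have := cder_lin4 (Uexp_lin p q xi (RC w) (RC f)) (dS s) (dCo s) (cder_cexp p s) (cder_cexp q s).
  move/cder_eq; apply.
  exact: (ode_alg (RC f) (RC (sin (w * s))) (RC (cos (w * s))) (cexp (p * RC s)) (cexp (q * RC s)) xpq mpq pq xi0 Dp Dq).2.
have Zc0 : Zc 0 = 0.
  rewrite /Zc !cexp0 mulr0 sin0 cos0 /Zexp.
  have -> : RC 0 = 0 :> C by [].
  have -> : RC 1 = 1 :> C by [].
  ring.
have Uc0 : Uc 0 = 0.
  rewrite /Uc !cexp0 mulr0 sin0 cos0 /Uexp.
  have -> : RC 0 = 0 :> C by [].
  have -> : RC 1 = 1 :> C by [].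
  ring.
move=> t.
have [Pr Qr] : complex.Re (Zc t) - z t = 0 /\ complex.Re (Uc t) - u t = 0.
  apply: (@uniq0 R mu (fun s => complex.Re (Zc s) - z s) (fun s => complex.Re (Uc s) - u s) mu0
  (fun s => dB (dZc s).1 (dz s)) _ _ _ t).
  - move=> s; apply: is_derive_eq (dB (dUc s).1 (du s)) _.
    rewrite !cReD !cReN !cReM /=; ring.
  - by rewrite /= Zc0 z0 subrr.
  - by rewrite /= Uc0 u0 subrr.
have [Pi Qi] : complex.Im (Zc t) = 0 /\ complex.Im (Uc t) = 0.
  apply: (@uniq0 R mu (fun s => complex.Im (Zc s)) (fun s => complex.Im (Uc s)) mu0
  (fun s => (dZc s).2) _ _ _ t).
  - move=> s; apply: is_derive_eq (dUc s).2 _.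
    rewrite !cImD !cImN !cImM /=; ring.
  - by rewrite /= Zc0.
  - by rewrite /= Uc0.
split.
  apply/eqP; rewrite eq_complex /=; apply/andP; split; apply/eqP.
    by apply/esym/eqP; rewrite -subr_eq0; apply/eqP.
  by rewrite -/(Zc t) Pi.
apply/eqP; rewrite eq_complex /=; apply/andP; split; apply/eqP.
  by apply/esym/eqP; rewrite -subr_eq0; apply/eqP.
by rewrite -/(Uc t) Qi.
Qed.

End M.

End HM.
Import HM.

Module HP.
Import Order.TTheory GRing.Theory Num.Theory.
Import numFieldNormedType.Exports.
Local Open Scope ring_scope.
Set Implicit Arguments. Unset Strict Implicit.
Section P.
Variable R : realType.

Lemma dsum n (g : 'I_n -> R -> R) (dg : 'I_n -> R) (t : R) :
  (forall k, is_derive t 1 (g k) (dg k)) ->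
  is_derive t 1 (fun s => \sum_k g k s) (\sum_k dg k).
Proof.
elim: n g dg => [|n IH] g dg H.
  rewrite big_ord0; move/dext: (dC t 0); apply => s; by rewrite big_ord0.
rewrite big_ord_recr /=.
move/dext: (dD (IH (fun k => g (widen_ord (leqnSn n) k)) (fun k => dg (widen_ord (leqnSn n) k)) (fun k => H _)) (H ord_max)).
by apply => s; rewrite big_ord_recr.
Qed.

Lemma sum_eqr n (j : 'I_n) (F : 'I_n -> R) : \sum_k (F k *+ (j == k)) = F j.
Proof.
rewrite (bigD1 j) //= eqxx mulr1n big1 ?addr0 // => k kj.
by rewrite eq_sym (negbTE kj) mulr0n.
Qed.

Lemma Lrow n (A : 'M[R]_n) (x : 'I_n -> R) j :
  \sum_k laplacian A j k * x k = \sum_k A j k * (x j - x k).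
Proof.
rewrite /laplacian /degree_mx.
under eq_bigr do rewrite !mxE mulrBl.
rewrite sumrB.
under eq_bigr do rewrite mulrnAl.
rewrite sum_eqr.
under [X in _ = X]eq_bigr do rewrite mulrBr.
by rewrite sumrB mulr_suml.
Qed.

Lemma psd n (A : 'M[R]_n) (x : 'I_n -> R) : is_simple_adjacency A ->
  0 <= \sum_j x j * \sum_k laplacian A j k * x k.
Proof.
case=> A01 [As _].
under eq_bigr do rewrite Lrow mulr_sumr.
set S := \sum_j _.
have S2 : S = \sum_j \sum_k x k * (A j k * (x k - x j)).
  rewrite /S exchange_big /=; apply: eq_bigr => j _; apply: eq_bigr => k _.
  by rewrite As.
have : 0 <= S + S.
  rewrite [X in _ + X]S2 /S -big_split /=; apply: sumr_ge0 => j _.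
  rewrite -big_split /=; apply: sumr_ge0 => k _.
  have -> : x j * (A j k * (x j - x k)) + x k * (A j k * (x k - x j)) = A j k * ((x j - x k) ^+ 2) by ring.
  apply: mulr_ge0; last exact: sqr_ge0.
  by case: (A01 j k) => ->; lra.
lra.
Qed.

Lemma recon n (Phi : 'M[R]_n) (Y : 'I_n -> R) a : Phi *m Phi^T = 1%:M ->
  \sum_i (\sum_k Phi k i * Y k) * Phi a i = Y a.
Proof.
move=> PhiO.
under eq_bigr do rewrite mulr_suml.
rewrite exchange_big /=.
have E k : \sum_i Phi k i * Y k * Phi a i = Y k * (a == k)%:R.
  have := congr1 (fun M : 'M[R]_n => M a k) PhiO; rewrite /= !mxE => <-.
  rewrite mulr_sumr; apply: eq_bigr => i _; rewrite mxE; ring.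
under eq_bigr do rewrite E mulr_natr.
by rewrite sum_eqr.
Qed.

Lemma RCD (a b : R) : RC (a + b) = RC a + RC b.
Proof. by apply/eqP; rewrite eq_complex /= addr0 !eqxx. Qed.

Lemma RC_sum n (F : 'I_n -> R) : RC (\sum_i F i) = \sum_i RC (F i).
Proof. exact: (big_morph (@RC R) RCD (erefl _)). Qed.
End P.

End HP.
Import HP.

Import Order.TTheory GRing.Theory Num.Theory.
Local Open Scope ring_scope.

Theorem proposition4 (R : realType) (n : nat) (A : 'M[R]_n)
  (Phi : 'M[R]_n) (mu : 'I_n -> R) (xi : 'I_n -> R[i])
  (h : 'I_n) (F0 w : R) (y : R -> 'cV[R]_(n + n)) :
  is_simple_adjacency A ->
  graph_connected A ->
  (* the columns phi_i := col i Phi form an orthonormal basis of R^n *)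
  Phi^T *m Phi = 1%:M ->
  (* L phi_i = mu_i phi_i *)
  (forall i, laplacian A *m col i Phi = mu i *: col i Phi) ->
  (forall i, mu i != 2) ->
  (* xi_i is a complex square root of mu_i^2 - 4 *)
  (forall i, xi i ^+ 2 = RC (mu i ^+ 2 - 4)) ->
  0 < w -> w != 1 ->
  (* y solves y' = G y + b(t), y(0) = 0 *)
  (forall t : R, is_derive t (1 : R) y (Gmx (laplacian A) *m y t + forcing h F0 w t)) ->
  y 0 = 0 ->
  let lp i := (xi i - RC (mu i)) / 2 in
  let lm i := - ((xi i + RC (mu i)) / 2) in
  let W := RC w in
  forall t : R,
  let S := RC (sin (w * t)) in
  let Co := RC (cos (w * t)) in
  let T := RC t in
  cvC (usubmx (y t)) =
    \sum_(i < n) (RC (F0 * Phi h i) / xi i *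
      ( ((1 - lm i ^+ 2) / (xi i * (W ^+ 2 + lm i ^+ 2))
         + (1 - lp i ^+ 2) / (xi i * (W ^+ 2 + lp i ^+ 2))) * S
      + (1 / (W ^+ 2 + lm i ^+ 2) - 1 / (W ^+ 2 + lp i ^+ 2)) * W * Co
      + W * cexp (lp i * T) / (W ^+ 2 + lp i ^+ 2)
      - W * cexp (lm i * T) / (W ^+ 2 + lm i ^+ 2))) *: cvC (col i Phi)
  /\
  cvC (dsubmx (y t)) =
    \sum_(i < n) (RC (F0 * Phi h i) / xi i *
      ( (lm i * (1 - lm i ^+ 2) / (xi i * (W ^+ 2 + lm i ^+ 2))
         + lp i * (1 - lp i ^+ 2) / (xi i * (W ^+ 2 + lp i ^+ 2))) * S
      + (lm i / (W ^+ 2 + lm i ^+ 2) - lp i / (W ^+ 2 + lp i ^+ 2)) * W * Co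
      + W * lp i * cexp (lp i * T) / (W ^+ 2 + lp i ^+ 2)
      - W * lm i * cexp (lm i * T) / (W ^+ 2 + lm i ^+ 2))) *: cvC (col i Phi).
Proof.
move=> Aadj _ PhiO Leig mu2 Hxi w0 w1 dy y0 lp lm W t S Co T.
set L := laplacian A.
have Lsym j k : L j k = L k j.
  have [->|jk] := eqVneq j k; first by [].
  case: Aadj => _ [As _].
  by rewrite /L /laplacian /degree_mx !mxE (negbTE jk) eq_sym (negbTE jk) As.
have Leig' i j : \sum_k L j k * Phi k i = mu i * Phi j i.
  have := congr1 (fun M : 'cV[R]_n => M j 0) (Leig i); rewrite /= !mxE -/L => <-.
  by apply: eq_bigr => k _; congr (_ * _); rewrite mxE.
have mu0 i : 0 <= mu i.
  have h1 : \sum_j Phi j i * Phi j i = 1.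
    have := congr1 (fun M : 'M[R]_n => M i i) PhiO; rewrite /= !mxE eqxx /=.
    by under eq_bigr do rewrite mxE.
  have -> : mu i = \sum_j Phi j i * \sum_k L j k * Phi k i.
    under eq_bigr do rewrite Leig' mulrCA.
    by rewrite -mulr_sumr h1 mulr1.
  exact: psd.
have PhiO' : Phi *m Phi^T = 1%:M by apply: mulmx1C.
pose D s := Gmx L *m y s + forcing h F0 w s.
have DEu s k : D s (lshift n k) 0 = y s (rshift n k) 0.
  rewrite /D /Gmx /forcing -{1}[y s]vsubmxK mul_block_col mxE col_mxEu col_mxEu.
  by rewrite mul0mx mul1mx add0r !mxE addr0.
have DEd s k : D s (rshift n k) 0 =
    - y s (lshift n k) 0 - \sum_j L k j * y s (rshift n j) 0 + F0 * sin (w * s) * (h == k)%:R.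
  rewrite /D /Gmx /forcing -{1}[y s]vsubmxK mul_block_col mxE col_mxEd col_mxEd mulNmx mul1mx mulNmx !mxE.
  rewrite andbT eq_sym; congr (_ - _ + _).
  by apply: eq_bigr => j _; rewrite [dsubmx _ _ _]mxE.
pose z i s := \sum_k Phi k i * y s (lshift n k) 0.
pose u i s := \sum_k Phi k i * y s (rshift n k) 0.
have dz i (s : R) : is_derive s 1 (z i) (u i s).
  have H := dsum (fun k => dZ (Phi k i) (@dentry _ _ _ y s _ (lshift n k) 0 (dy s))).
  apply: is_derive_eq H _.
  transitivity (\sum_k Phi k i * D s (lshift n k) 0); first by [].
  by apply: eq_bigr => k _; rewrite DEu.
have du i (s : R) : is_derive s 1 (u i) (- z i s - mu i * u i s + (F0 * Phi h i) * sin (w * s)).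
  have H := dsum (fun k => dZ (Phi k i) (@dentry _ _ _ y s _ (rshift n k) 0 (dy s))).
  apply: is_derive_eq H _.
  transitivity (\sum_k Phi k i * D s (rshift n k) 0); first by [].
  under eq_bigr do rewrite DEd mulrDr mulrBr mulrN.
  rewrite big_split sumrB sumrN /=.
  have P2 : \sum_k Phi k i * (\sum_j L k j * y s (rshift n j) 0) = mu i * u i s.
    under eq_bigr do rewrite mulr_sumr.
    rewrite exchange_big /= /u mulr_sumr; apply: eq_bigr => j _.
    rewrite mulrA -Leig' mulr_suml; apply: eq_bigr => k _.
    by rewrite Lsym; ring.
  have P3 : \sum_k Phi k i * (F0 * sin (w * s) * (h == k)%:R) = F0 * Phi h i * sin (w * s).
    under eq_bigr do rewrite mulrA mulr_natr.
    by rewrite sum_eqr; ring.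
  by rewrite P2 P3.
have z0 i : z i 0 = 0.
  by rewrite /z y0; apply: big1 => k _; rewrite mxE mulr0.
have u0 i : u i 0 = 0.
  by rewrite /u y0; apply: big1 => k _; rewrite mxE mulr0.
have Hm i := mode (mu0 i) (mu2 i) (Hxi i) w0 w1 (dz i) (du i) (z0 i) (u0 i) t.
split.
  transitivity (\sum_i RC (z i t) *: cvC (col i Phi)); last first.
    by apply: eq_bigr => i _; congr (_ *: _); exact: (Hm i).1.
  apply/matrixP => a b; rewrite (ord1 b) summxE !mxE.
  under eq_bigr do rewrite !mxE.
  change (RC (y t (lshift n a) 0) = \sum_i RC (z i t) * RC (Phi a i)).
  under eq_bigr do rewrite -RCM.
  rewrite -RC_sum; congr RC.
  exact: (esym (recon (fun k => y t (lshift n k) 0) a PhiO')).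
transitivity (\sum_i RC (u i t) *: cvC (col i Phi)); last first.
  by apply: eq_bigr => i _; congr (_ *: _); exact: (Hm i).2.
apply/matrixP => a b; rewrite (ord1 b) summxE !mxE.
under eq_bigr do rewrite !mxE.
change (RC (y t (rshift n a) 0) = \sum_i RC (u i t) * RC (Phi a i)).
under eq_bigr do rewrite -RCM.
rewrite -RC_sum; congr RC.
exact: (esym (recon (fun k => y t (rshift n k) 0) a PhiO')).
Qed.
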